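(* The local complexity of the class of unit-distance graphs is $\Omega(n)$.
   Context: A unit-distance graph is a graph whose vertices are points in the plane, two points being adjacent iff their Euclidean distance equals 1. All graphs are finite, simple, connected; $n$ is the number of vertices, with distinct identifiers in $\{1,\dots,\mathrm{poly}(n)\}$. A proof labeling scheme for a class $\mathcal{G}$ consists of a prover assigning a certificate (binary word) to each vertex of each $G\in\mathcal{G}$ and a local verifier where each vertex accepts or rejects based only on identifiers and certificates in its closed neighborhood; all vertices accept when $G\in\mathcal{G}$ with the prover's certificates, and when $G\notin\mathcal{G}$ some vertex rejects for every certificate assignment. The local complexity of $\mathcal{G}$ is the minimum, over such schemes, of the maximum certificate length used on $n$-vertex graphs of $\mathcal{G}$. *)

(* Defs.v *)
From Stdlib Require Import Reals.
From mathcomp Require Import all_boot.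
Set Implicit Arguments. Unset Strict Implicit. Unset Printing Implicit Defensive.

Definition simple_graph (n : nat) (e : rel 'I_n) : Prop :=
  symmetric e /\ irreflexive e.

Definition connected_graph (n : nat) (e : rel 'I_n) : Prop :=
  forall x y : 'I_n, connect e x y.

Definition sqdist (p q : R * R) : R :=
  (Rplus (Rmult (Rminus (fst p) (fst q)) (Rminus (fst p) (fst q))) (Rmult (Rminus (snd p) (snd q)) (Rminus (snd p) (snd q)))).

Definition unit_distance_graph (n : nat) (e : rel 'I_n) : Prop :=
  exists p : 'I_n -> R * R,
    injective p /\ forall x y : 'I_n, e x y <-> sqdist (p x) (p y) = R1.

(* Identifier assignment: distinct identifiers in {1, ..., n^k}
   (k is the fixed exponent of the polynomial range poly(n)). *)
Definition valid_ids (k n : nat) (id : 'I_n -> nat) : Prop :=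
  injective id /\ forall v : 'I_n, 1 <= id v <= n ^ k.

Definition cert := seq bool.

(* What a vertex v sees of its (open) neighbourhood: the partial map sending the
   identifier of each neighbour of v to that neighbour's certificate (identifiers
   are distinct, so this is well defined); together with v's own identifier and
   certificate this is exactly the information of its closed neighbourhood. *)
Definition nbr_view (n : nat) (e : rel 'I_n) (id : 'I_n -> nat)
    (c : 'I_n -> cert) (v : 'I_n) : nat -> option cert :=
  fun i => match [pick u | e v u && (id u == i)] with
           | Some u => Some (c u)
           | None => None
           end.

(* A local verifier: decision of a vertex from its own identifier and certificate
   and the identifiers/certificates of its neighbours. *)
Definition verifier := nat -> cert -> (nat -> option cert) -> bool.

Definition prover := forall n : nat, rel 'I_n -> ('I_n -> nat) -> 'I_n -> cert.

Definition all_accept (V : verifier) (n : nat) (e : rel 'I_n) (id : 'I_n -> nat)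
    (c : 'I_n -> cert) : Prop :=
  forall v : 'I_n, V (id v) (c v) (nbr_view e id c v).

Definition instance (k n : nat) (e : rel 'I_n) (id : 'I_n -> nat) : Prop :=
  simple_graph e /\ connected_graph e /\ valid_ids k id.

Definition is_PLS_unit_distance (k : nat) (P : prover) (V : verifier) : Prop :=
  (forall (n : nat) (e : rel 'I_n) (id : 'I_n -> nat),
      instance k e id -> unit_distance_graph e -> all_accept V e id (P n e id))
  /\
  (forall (n : nat) (e : rel 'I_n) (id : 'I_n -> nat),
      instance k e id -> ~ unit_distance_graph e ->
      forall c : 'I_n -> cert, ~ all_accept V e id c).

(* Main.v *)
Require Import Defs.
From Stdlib Require Import Reals.
From Stdlib Require Import Lra Lia ZArith FunctionalExtensionality.
From mathcomp Require Import all_boot.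
From mathcomp Require Import zify.
Set Implicit Arguments. Unset Strict Implicit. Unset Printing Implicit Defensive.

(* Proof idea: a rigid U-shaped triangular-lattice gadget with 2^m "teeth"
   configurations separated by a 4-vertex frame; a crossing (fooling-set)
   argument forces some frame certificate to have length Omega(n). *)

Open Scope R_scope.

Lemma rhombus (a b c d : R * R) :
  sqdist c a = 1 -> sqdist c b = 1 -> sqdist d a = 1 -> sqdist d b = 1 ->
  a <> b -> c <> d ->
  d = (fst a + fst b - fst c, snd a + snd b - snd c).
Proof.
case: a => a1 a2; case: b => b1 b2; case: c => c1 c2; case: d => d1 d2.
rewrite /sqdist /= => hca hcb hda hdb hab hcd.
set w1 := d1 - c1; set w2 := d2 - c2.
set v1 := d1 + c1 - a1 - b1; set v2 := d2 + c2 - a2 - b2.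
set B1 := b1 - a1; set B2 := b2 - a2.
have hw : w1 * B1 + w2 * B2 = 0.
  have -> : w1 * B1 + w2 * B2 =
    (- ((c1 - a1) * (c1 - a1) + (c2 - a2) * (c2 - a2)) + ((c1 - b1) * (c1 - b1) + (c2 - b2) * (c2 - b2))
     + ((d1 - a1) * (d1 - a1) + (d2 - a2) * (d2 - a2)) - ((d1 - b1) * (d1 - b1) + (d2 - b2) * (d2 - b2))) / 2
    by rewrite /w1 /w2 /B1 /B2; field.
  rewrite hca hcb hda hdb; field.
have hv : v1 * B1 + v2 * B2 = 0.
  have -> : v1 * B1 + v2 * B2 =
    (((c1 - a1) * (c1 - a1) + (c2 - a2) * (c2 - a2)) - ((c1 - b1) * (c1 - b1) + (c2 - b2) * (c2 - b2))
     + ((d1 - a1) * (d1 - a1) + (d2 - a2) * (d2 - a2)) - ((d1 - b1) * (d1 - b1) + (d2 - b2) * (d2 - b2))) / 2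
    by rewrite /v1 /v2 /B1 /B2; field.
  rewrite hca hcb hda hdb; field.
have hwv : w1 * v1 + w2 * v2 = 0.
  have -> : w1 * v1 + w2 * v2 =
    (- ((c1 - a1) * (c1 - a1) + (c2 - a2) * (c2 - a2)) - ((c1 - b1) * (c1 - b1) + (c2 - b2) * (c2 - b2))
     + ((d1 - a1) * (d1 - a1) + (d2 - a2) * (d2 - a2)) + ((d1 - b1) * (d1 - b1) + (d2 - b2) * (d2 - b2))) / 2
    by rewrite /w1 /w2 /v1 /v2; field.
  rewrite hca hcb hda hdb; field.
have hx1 : (w1 * v2 - w2 * v1) * B1 = 0.
  have -> : (w1 * v2 - w2 * v1) * B1 = v2 * (w1 * B1 + w2 * B2) - w2 * (v1 * B1 + v2 * B2) by ring.
  rewrite hw hv; ring.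
have hx2 : (w1 * v2 - w2 * v1) * B2 = 0.
  have -> : (w1 * v2 - w2 * v1) * B2 = w1 * (v1 * B1 + v2 * B2) - v1 * (w1 * B1 + w2 * B2) by ring.
  rewrite hw hv; ring.
have hx : w1 * v2 - w2 * v1 = 0.
  have [hB1|hB1] := Req_dec B1 0.
  - have [hB2|hB2] := Req_dec B2 0.
    + exfalso; apply: hab; rewrite /B1 /B2 in hB1 hB2; f_equal; lra.
    + by case: (Rmult_integral _ _ hx2) => // /hB2.
  - by case: (Rmult_integral _ _ hx1) => // /hB1.
have hprod : (w1 * w1 + w2 * w2) * (v1 * v1 + v2 * v2) = 0.
  have -> : (w1 * w1 + w2 * w2) * (v1 * v1 + v2 * v2) =
     (w1 * v1 + w2 * v2) * (w1 * v1 + w2 * v2) + (w1 * v2 - w2 * v1) * (w1 * v2 - w2 * v1) by ring.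
  rewrite hwv hx; ring.
case: (Rmult_integral _ _ hprod) => h.
- exfalso; apply: hcd.
  have h1 : w1 = 0 by nra.
  have h2 : w2 = 0 by nra.
  rewrite /w1 /w2 in h1 h2; f_equal; lra.
- have h1 : v1 = 0 by nra.
  have h2 : v2 = 0 by nra.
  rewrite /v1 /v2 in h1 h2; f_equal; lra.
Qed.

Definition ladj (p q : nat * nat) : bool :=
  [|| (q.1 == p.1.+1) && (q.2 == p.2), (p.1 == q.1.+1) && (q.2 == p.2),
      (q.1 == p.1) && (q.2 == p.2.+1), (q.1 == p.1) && (p.2 == q.2.+1),
      (q.1.+1 == p.1) && (q.2 == p.2.+1) | (q.1 == p.1.+1) && (q.2.+1 == p.2)].

Definition emb (p : nat * nat) : R * R :=
  (INR p.1 + INR p.2 / 2, INR p.2 * sqrt 3 / 2).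

Lemma sqdist_emb p q :
  sqdist (emb p) (emb q) =
  (INR p.1 - INR q.1) * (INR p.1 - INR q.1) + (INR p.1 - INR q.1) * (INR p.2 - INR q.2)
  + (INR p.2 - INR q.2) * (INR p.2 - INR q.2).
Proof.
rewrite /sqdist /emb /=.
have hs : sqrt 3 * sqrt 3 = 3 by apply: sqrt_sqrt; lra.
set X := INR p.1 - INR q.1. set Y := INR p.2 - INR q.2.
have -> : INR p.1 + INR p.2 / 2 - (INR q.1 + INR q.2 / 2) = X + Y / 2 by rewrite /X /Y; field.
have -> : INR p.2 * sqrt 3 / 2 - INR q.2 * sqrt 3 / 2 = Y * sqrt 3 / 2 by rewrite /Y; field.
have -> : Y * sqrt 3 / 2 * (Y * sqrt 3 / 2) = Y * Y * (sqrt 3 * sqrt 3) / 4 by field.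
rewrite hs; field.
Qed.

Lemma quad_Z (x y : Z) : (x * x + x * y + y * y = 1)%Z ->
  (x = 1 /\ y = 0 \/ x = -1 /\ y = 0 \/ x = 0 /\ y = 1 \/ x = 0 /\ y = -1 \/
   x = 1 /\ y = -1 \/ x = -1 /\ y = 1)%Z.
Proof.
move=> h.
have hy : (y * y <= 1)%Z by nia.
have hx : (x * x <= 1)%Z by nia.
have [hx'|[hx'|hx']] : (x = -1 \/ x = 0 \/ x = 1)%Z by nia.
all: have [hy'|[hy'|hy']] : (y = -1 \/ y = 0 \/ y = 1)%Z by nia.
all: subst; lia.
Qed.

Lemma ladj_sqdist p q : ladj p q <-> sqdist (emb p) (emb q) = 1.
Proof.
case: p q => [p1 p2] [q1 q2].
rewrite sqdist_emb !INR_IZR_INZ /=.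
have -> : (IZR (Z.of_nat p1) - IZR (Z.of_nat q1)) * (IZR (Z.of_nat p1) - IZR (Z.of_nat q1))
  + (IZR (Z.of_nat p1) - IZR (Z.of_nat q1)) * (IZR (Z.of_nat p2) - IZR (Z.of_nat q2))
  + (IZR (Z.of_nat p2) - IZR (Z.of_nat q2)) * (IZR (Z.of_nat p2) - IZR (Z.of_nat q2))
  = IZR ((Z.of_nat p1 - Z.of_nat q1) * (Z.of_nat p1 - Z.of_nat q1)
      + (Z.of_nat p1 - Z.of_nat q1) * (Z.of_nat p2 - Z.of_nat q2)
      + (Z.of_nat p2 - Z.of_nat q2) * (Z.of_nat p2 - Z.of_nat q2))
  by rewrite !plus_IZR !mult_IZR !minus_IZR; ring.
split.
- move=> h; apply: f_equal.
  rewrite /ladj /= in h; lia.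
- move=> /eq_IZR /quad_Z; rewrite /ladj /=; lia.
Qed.

Definition affv (P U W : R * R) (x y : R) : R * R :=
  (fst P + x * fst U + y * fst W, snd P + x * snd U + y * snd W).
Definition vsub (a b : R * R) : R * R := (fst a - fst b, snd a - snd b).
Definition rdiff (a b : nat) : R := INR a - INR b.

Lemma rdiff_add (ld lc la lb K : nat) : (ld + lc = la + lb)%N ->
  rdiff ld K = rdiff la K + rdiff lb K - rdiff lc K.
Proof.
move=> h; have := f_equal INR h; rewrite !plus_INR /rdiff => h'; lra.
Qed.

Lemma aff_step P U W (a b c d : R * R) xa ya xb yb xc yc xd yd :
  a = affv P U W xa ya -> b = affv P U W xb yb -> c = affv P U W xc yc ->
  d = (fst a + fst b - fst c, snd a + snd b - snd c) ->
  xd = xa + xb - xc -> yd = ya + yb - yc -> d = affv P U W xd yd.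
Proof.
move=> -> -> -> -> -> ->; rewrite /affv /=; f_equal; ring.
Qed.

Lemma aff_dist P U W x y1 y2 a b : y1 = y2 + 1 -> W = vsub a b ->
  sqdist (affv P U W x y1) (affv P U W x y2) = sqdist a b.
Proof.
move=> -> ->; rewrite /sqdist /affv /vsub /=; ring.
Qed.

Lemma aff_base0 (P U W : R * R) : P = affv P U W 0 0.
Proof. case: P => a b; rewrite /affv /vsub /=; f_equal; ring. Qed.

Lemma aff_baseU (P Q W : R * R) : Q = affv P (vsub P Q) W (-1) 0.
Proof. case: P Q => a b [c d]; rewrite /affv /vsub /=; f_equal; ring. Qed.

Lemma aff_baseW (P Q U : R * R) : Q = affv P U (vsub P Q) 0 (-1).
Proof. case: P Q => a b [c d]; rewrite /affv /vsub /=; f_equal; ring. Qed.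

Close Scope R_scope.

Section Construction.
Variables (n m : nat).
Hypothesis hn : 14 * m + 20 <= n.

Definition MM := 3 * m + 2.
Definition SS := 2 * MM + 4.
Definition T1 := 2 * SS + 4.
Definition CC := n + MM + 1.

Section Bits.
Variables (bA bB : nat -> bool).

Definition labi (v : nat) : nat :=
  if v < SS then CC - v %/ 2
  else if v < SS + 4 then n + MM + (v - SS) %% 2
  else if v < T1 then CC - (v - SS - 4) %/ 2
  else if v < T1 + m then n + 2 + 3 * (v - T1)
  else if v < T1 + 2 * m then n + 2 + 3 * (v - T1 - m)
  else n - 1 - (v - T1 - 2 * m).

Definition labj (v : nat) : nat :=
  if v < SS then 1 + v %% 2
  else if v < SS + 4 then 3 + (v - SS) %/ 2
  else if v < T1 then 5 + (v - SS - 4) %% 2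
  else if v < T1 + m then 3 * bA (v - T1)
  else if v < T1 + 2 * m then 4 + 3 * bB (v - T1 - m)
  else 1.

Definition lab v := (labi v, labj v).

Variant lab_spec (v : nat) : nat -> nat -> Type :=
 | LS1 of v < SS : lab_spec v (CC - v %/ 2) (1 + v %% 2)
 | LS2 of SS <= v < SS + 4 : lab_spec v (n + MM + (v - SS) %% 2) (3 + (v - SS) %/ 2)
 | LS3 of SS + 4 <= v < T1 : lab_spec v (CC - (v - SS - 4) %/ 2) (5 + (v - SS - 4) %% 2)
 | LS4 of T1 <= v < T1 + m : lab_spec v (n + 2 + 3 * (v - T1)) (3 * bA (v - T1))
 | LS5 of T1 + m <= v < T1 + 2 * m : lab_spec v (n + 2 + 3 * (v - T1 - m)) (4 + 3 * bB (v - T1 - m))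
 | LS6 of T1 + 2 * m <= v : lab_spec v (n - 1 - (v - T1 - 2 * m)) 1.

Lemma labP v : lab_spec v (labi v) (labj v).
Proof.
rewrite /labi /labj.
case: ifP => h1; first by constructor.
case: ifP => h2; first by constructor; lia.
case: ifP => h3; first by constructor; lia.
case: ifP => h4; first by constructor; lia.
case: ifP => h5; first by constructor; lia.
constructor; lia.
Qed.
End Bits.

Definition inA v := (v < SS) || ((T1 <= v) && (v < T1 + m)) || (T1 + 2 * m <= v).
Definition inB v := ((SS + 2 <= v) && (v < T1)) || ((T1 + m <= v) && (v < T1 + 2 * m)).
Definition AB u v := inA u && inB v || inB u && inA v.

Definition EE bA bB u v := ~~ AB u v && ladj (lab bA bB u) (lab bA bB v).

Ltac crunch := unfold T1, CC in *; unfold SS in *; unfold MM in *; lia.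

Lemma lab_inj bA bB u v : u < n -> v < n -> lab bA bB u = lab bA bB v -> u = v.
Proof.
move=> hu hv; rewrite /lab => E; have /= e1 := f_equal fst E; have /= e2 := f_equal snd E; clear E.
case: (labP bA bB u) e1 e2 => hu' e1 e2. all: case: (labP bA bB v) e1 e2. all: intros hv' e3 e4. all: crunch.
Qed.


Lemma ladj_sym p q : ladj p q = ladj q p.
Proof. case: p => p1 p2; case: q => q1 q2; rewrite /ladj /=; apply/idP/idP => h; lia. Qed.

Lemma ladj_irr p : ladj p p = false.
Proof. case: p => [p1 p2]; rewrite /ladj /=; apply/negbTE; lia. Qed.

Lemma AB_sym u v : AB u v = AB v u.
Proof. by rewrite /AB; case: (inA u); case: (inB u); case: (inA v); case: (inB v). Qed.

Lemma EE_sym bA bB u v : EE bA bB u v = EE bA bB v u.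
Proof. by rewrite /EE AB_sym ladj_sym. Qed.

Lemma EE_irr bA bB u : EE bA bB u u = false.
Proof. by rewrite /EE ladj_irr andbF. Qed.

Lemma AB_nadj bA u v : u < n -> v < n -> inA u -> inB v ->
  ladj (lab bA bA u) (lab bA bA v) = false.
Proof.
move=> hu hv hA hB; apply/negbTE; rewrite /lab.
case: (labP bA bA u) hA hB => hu' hA hB; case: (labP bA bA v) hA hB => hv' hA hB;
  rewrite /inA /inB in hA hB;
  try (exfalso; clear -hu' hv' hA hB; crunch).
all: rewrite /ladj /=.
all: try crunch.
case: (eqVneq (u - T1) (v - T1 - m)) => [Heq|Hneq]; first rewrite Heq.
all: crunch.
Qed.


Section Regions.
Variables (bA bB : nat -> bool) (v : nat).
Lemma labi_R1 : v < SS -> labi v = CC - v %/ 2.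
Proof. by case: (labP bA bB v) => h; crunch. Qed.
Lemma labi_R2 : SS <= v < SS + 4 -> labi v = n + MM + (v - SS) %% 2.
Proof. by case: (labP bA bB v) => h; crunch. Qed.
Lemma labi_R3 : SS + 4 <= v < T1 -> labi v = CC - (v - SS - 4) %/ 2.
Proof. by case: (labP bA bB v) => h; crunch. Qed.
Lemma labi_R4 : T1 <= v < T1 + m -> labi v = n + 2 + 3 * (v - T1).
Proof. by case: (labP bA bB v) => h; crunch. Qed.
Lemma labi_R5 : T1 + m <= v < T1 + 2 * m -> labi v = n + 2 + 3 * (v - T1 - m).
Proof. by case: (labP bA bB v) => h; crunch. Qed.
Lemma labi_R6 : T1 + 2 * m <= v -> labi v = n - 1 - (v - T1 - 2 * m).
Proof. by case: (labP bA bB v) => h; crunch. Qed.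
Lemma labj_R1 : v < SS -> labj bA bB v = 1 + v %% 2.
Proof. by case: (labP bA bB v) => h; crunch. Qed.
Lemma labj_R2 : SS <= v < SS + 4 -> labj bA bB v = 3 + (v - SS) %/ 2.
Proof. by case: (labP bA bB v) => h; crunch. Qed.
Lemma labj_R3 : SS + 4 <= v < T1 -> labj bA bB v = 5 + (v - SS - 4) %% 2.
Proof. by case: (labP bA bB v) => h; crunch. Qed.
Lemma labj_R4 : T1 <= v < T1 + m -> labj bA bB v = 3 * bA (v - T1).
Proof. by case: (labP bA bB v) => h; crunch. Qed.
Lemma labj_R5 : T1 + m <= v < T1 + 2 * m -> labj bA bB v = 4 + 3 * bB (v - T1 - m).
Proof. by case: (labP bA bB v) => h; crunch. Qed.
Lemma labj_R6 : T1 + 2 * m <= v -> labj bA bB v = 1.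
Proof. by case: (labP bA bB v) => h; crunch. Qed.
End Regions.

Lemma labi_b0 k : 2 * k < SS -> labi (2 * k) = CC - k.
Proof. move=> h; rewrite (@labi_R1 xpred0 xpred0) //; crunch. Qed.
Lemma labi_b1 k : 2 * k + 1 < SS -> labi (2 * k + 1) = CC - k.
Proof. move=> h; rewrite (@labi_R1 xpred0 xpred0) //; crunch. Qed.
Lemma labj_b0 bA bB k : 2 * k < SS -> labj bA bB (2 * k) = 1.
Proof. move=> h; rewrite labj_R1 //; crunch. Qed.
Lemma labj_b1 bA bB k : 2 * k + 1 < SS -> labj bA bB (2 * k + 1) = 2.
Proof. move=> h; rewrite labj_R1 //; crunch. Qed.
Lemma labi_t0 k : SS + 4 + 2 * k < T1 -> labi (SS + 4 + 2 * k) = CC - k.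
Proof. move=> h; rewrite (@labi_R3 xpred0 xpred0); crunch. Qed.
Lemma labi_t1 k : SS + 4 + (2 * k + 1) < T1 -> labi (SS + 4 + (2 * k + 1)) = CC - k.
Proof. move=> h; rewrite (@labi_R3 xpred0 xpred0); crunch. Qed.
Lemma labj_t0 bA bB k : SS + 4 + 2 * k < T1 -> labj bA bB (SS + 4 + 2 * k) = 5.
Proof. move=> h; rewrite labj_R3; crunch. Qed.
Lemma labj_t1 bA bB k : SS + 4 + (2 * k + 1) < T1 -> labj bA bB (SS + 4 + (2 * k + 1)) = 6.
Proof. move=> h; rewrite labj_R3; crunch. Qed.

Ltac simp_lab :=
  repeat match goal with
  | |- context [labi (SS + 4 + (2 * ?k + 1))] => rewrite (@labi_t1 k); [|crunch]
  | |- context [labi (SS + 4 + 2 * ?k)] => rewrite (@labi_t0 k); [|crunch]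
  | |- context [labj ?a ?b (SS + 4 + (2 * ?k + 1))] => rewrite (@labj_t1 a b k); [|crunch]
  | |- context [labj ?a ?b (SS + 4 + 2 * ?k)] => rewrite (@labj_t0 a b k); [|crunch]
  | |- context [labi (2 * ?k + 1)] => rewrite (@labi_b1 k); [|crunch]
  | |- context [labi (2 * ?k)] => rewrite (@labi_b0 k); [|crunch]
  | |- context [labj ?a ?b (2 * ?k + 1)] => rewrite (@labj_b1 a b k); [|crunch]
  | |- context [labj ?a ?b (2 * ?k)] => rewrite (@labj_b0 a b k); [|crunch]
  | |- context [labi ?X] =>
      first [ rewrite (@labi_R1 xpred0 xpred0 X); [|crunch]
            | rewrite (@labi_R2 xpred0 xpred0 X); [|crunch]
            | rewrite (@labi_R3 xpred0 xpred0 X); [|crunch]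
            | rewrite (@labi_R4 xpred0 xpred0 X); [|crunch]
            | rewrite (@labi_R5 xpred0 xpred0 X); [|crunch]
            | rewrite (@labi_R6 xpred0 xpred0 X); [|crunch] ]
  | |- context [labj ?a ?b ?X] =>
      first [ rewrite (@labj_R1 a b X); [|crunch]
            | rewrite (@labj_R2 a b X); [|crunch]
            | rewrite (@labj_R3 a b X); [|crunch]
            | rewrite (@labj_R4 a b X); [|crunch]
            | rewrite (@labj_R5 a b X); [|crunch]
            | rewrite (@labj_R6 a b X); [|crunch] ]
  end.

Lemma ladjE p q : q.1 = p.1 + 1 -> q.2 = p.2 -> ladj p q.
Proof. case: p q => [p1 p2] [q1 q2] /= h1 h2; rewrite /ladj /=; lia. Qed.
Lemma ladjW p q : p.1 = q.1 + 1 -> q.2 = p.2 -> ladj p q.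
Proof. case: p q => [p1 p2] [q1 q2] /= h1 h2; rewrite /ladj /=; lia. Qed.
Lemma ladjN p q : q.1 = p.1 -> q.2 = p.2 + 1 -> ladj p q.
Proof. case: p q => [p1 p2] [q1 q2] /= h1 h2; rewrite /ladj /=; lia. Qed.
Lemma ladjS p q : q.1 = p.1 -> p.2 = q.2 + 1 -> ladj p q.
Proof. case: p q => [p1 p2] [q1 q2] /= h1 h2; rewrite /ladj /=; lia. Qed.
Lemma ladjNW p q : q.1 + 1 = p.1 -> q.2 = p.2 + 1 -> ladj p q.
Proof. case: p q => [p1 p2] [q1 q2] /= h1 h2; rewrite /ladj /=; lia. Qed.
Lemma ladjSE p q : q.1 = p.1 + 1 -> q.2 + 1 = p.2 -> ladj p q.
Proof. case: p q => [p1 p2] [q1 q2] /= h1 h2; rewrite /ladj /=; lia. Qed.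

Ltac ladj_tac :=
  first [ apply: ladjE => /=; crunch | apply: ladjW => /=; crunch | apply: ladjN => /=; crunch
        | apply: ladjS => /=; crunch | apply: ladjNW => /=; crunch | apply: ladjSE => /=; crunch ].

Ltac edge_tac := rewrite /EE; apply/andP; split;
  [ rewrite /AB /inA /inB; crunch | rewrite /lab; simp_lab; ladj_tac ].

Definition par (bA bB : nat -> bool) v :=
  if v < SS then (if v %% 2 == 1 then v.-1 else v - 2)
  else if v < SS + 4 then (if v == SS then 3 else v.-1)
  else if v < T1 then (if v == SS + 4 then SS + 3 else if (v - SS - 4) %% 2 == 1 then v.-1 else v - 2)
  else if v < T1 + m then 2 * (MM + 1 - (2 + 3 * (v - T1))) + bA (v - T1)
  else if v < T1 + 2 * m then SS + 4 + 2 * (MM + 1 - (2 + 3 * (v - T1 - m))) + bB (v - T1 - m)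
  else if v == T1 + 2 * m then 2 * MM + 2 else v.-1.

Lemma par_ok bA bB v : 0 < v < n -> par bA bB v < v /\ EE bA bB (par bA bB v) v.
Proof.
move=> hv; rewrite /par; repeat case: ifP => ?; (split; [crunch | try edge_tac]).
- have H : v = SS + 1 \/ v = SS + 2 \/ v = SS + 3 by crunch.
  case: H => [->|[->|->]]; edge_tac.
- rewrite /EE; apply/andP; split; [rewrite /AB /inA /inB; crunch | rewrite /lab; simp_lab].
  by case: (bA (v - T1)); ladj_tac.
- rewrite /EE; apply/andP; split; [rewrite /AB /inA /inB; crunch | rewrite /lab; simp_lab].
  by case: (bB (v - T1 - m)); ladj_tac.
Qed.


Lemma labB_indep bA bB bB' u : ~~ ((T1 + m <= u) && (u < T1 + 2 * m)) ->
  lab bA bB u = lab bA bB' u.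
Proof.
move=> h; rewrite /lab; case: (labP bA bB u) h => hu h; case: (labP bA bB' u) h => hu' h;
  try reflexivity; exfalso; crunch.
Qed.

Lemma labA_indep bA bA' bB u : ~~ ((T1 <= u) && (u < T1 + m)) ->
  lab bA bB u = lab bA' bB u.
Proof.
move=> h; rewrite /lab; case: (labP bA bB u) h => hu h; case: (labP bA' bB u) h => hu' h;
  try reflexivity; exfalso; crunch.
Qed.

Lemma F_Bnbr bA bB v u : SS <= v < SS + 2 -> u < n -> inB u ->
  ladj (lab bA bB v) (lab bA bB u) -> u = SS + 2 \/ u = SS + 3.
Proof.
move=> hv hu hB; rewrite /lab (@labi_R2 bA bB v) ?(@labj_R2 bA bB v); try crunch.
case: (labP bA bB u) hB => hu' hB; rewrite /ladj /inB /= in hB * => H; crunch.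
Qed.

Lemma viewA bA bB v u : inA v -> EE bA bB v u = EE bA bA v u.
Proof.
move=> hA; rewrite /EE; case hB: (inB u).
- by rewrite /AB hA hB.
- rewrite (@labB_indep bA bB bA u) ?(@labB_indep bA bB bA v) //.
  + move: hA; rewrite /inA; crunch.
  + move: hB; rewrite /inB => /negbT; crunch.
Qed.

Lemma viewB bA bB v u : inB v -> EE bA bB v u = EE bB bB v u.
Proof.
move=> hB; rewrite /EE; case hA: (inA u).
- by rewrite /AB hA hB orbT.
- rewrite (@labA_indep bA bB bB u) ?(@labA_indep bA bB bB v) //.
  + move: hB; rewrite /inB; crunch.
  + move: hA; rewrite /inA => /negbT; crunch.
Qed.

Lemma viewF bA bB v u : SS <= v < SS + 2 -> u < n -> EE bA bB v u = EE bA bA v u.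
Proof.
move=> hv hu.
have hAB : AB v u = false by rewrite /AB /inA /inB; apply/negbTE; crunch.
rewrite /EE hAB /=.
rewrite (@labB_indep bA bB bA v); last by crunch.
case hB: (inB u); last first.
  by rewrite (@labB_indep bA bB bA u) //; move: hB; rewrite /inB => /negbT; crunch.
case hT: ((T1 + m <= u) && (u < T1 + 2 * m)); last by rewrite (@labB_indep bA bB bA u) ?hT.
have L1 : forall bB', ladj (lab bA bB' v) (lab bA bB' u) = false.
  move=> bB'; apply/negP => /(F_Bnbr hv hu hB); move: hT; crunch.
by rewrite L1 -(@labB_indep bA bB bA v) ?L1 //; crunch.
Qed.


Lemma hn0 : 0 < n.
Proof. crunch. Qed.

Definition ov (v : nat) : 'I_n := insubd (Ordinal hn0) v.

Lemma ovK v : v < n -> val (ov v) = v.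
Proof. by move=> h; rewrite /ov val_insubd h. Qed.

Definition eg bA bB : rel 'I_n := fun u v => EE bA bB u v.

Lemma emb_inj p q : emb p = emb q -> p = q.
Proof.
case: p q => [p1 p2] [q1 q2]; rewrite /emb /= => [[h1 h2]].
have s3 : sqrt 3 <> IZR 0 by apply: Rgt_not_eq; apply: sqrt_lt_R0; lra.
have e2 : INR p2 = INR q2.
  apply: (Rmult_eq_reg_r (sqrt 3 / 2)); last by apply: Rgt_not_eq; apply: Rdiv_lt_0_compat; [apply: sqrt_lt_R0; lra|lra].
  rewrite /Rdiv -!Rmult_assoc; exact: h2.
have e1 : INR p1 = INR q1 by rewrite e2 in h1; lra.
by rewrite (INR_eq _ _ e1) (INR_eq _ _ e2).
Qed.

Lemma Gx_ud bA : unit_distance_graph (eg bA bA).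
Proof.
exists (fun v : 'I_n => emb (lab bA bA v)); split.
- move=> u v /emb_inj /(lab_inj (ltn_ord u) (ltn_ord v)); exact: val_inj.
- move=> u v; rewrite /eg /EE -ladj_sqdist.
  case hAB: (AB u v) => /=; last by [].
  split=> // H; exfalso; move: hAB H; rewrite /AB.
  case/orP=> /andP [h1 h2].
  + by rewrite AB_nadj.
  + by rewrite ladj_sym AB_nadj.
Qed.


Section NotUD.
Variables (bA bB : nat -> bool) (p : 'I_n -> R * R).
Hypothesis pinj : injective p.
Hypothesis piff : forall x y, eg bA bB x y <-> sqdist (p x) (p y) = R1.
Variable i : nat.
Hypotheses (hi : i < m) (hbA : bA i = true) (hbB : bB i = false).

Definition q v := p (ov v).

Lemma qedge u v : u < n -> v < n -> EE bA bB u v -> sqdist (q u) (q v) = R1.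
Proof.
move=> hu hv h; apply/piff; rewrite /eg !ovK //.
Qed.

Lemma qinj u v : u < n -> v < n -> u <> v -> q u <> q v.
Proof.
move=> hu hv huv /pinj /(f_equal val); rewrite !ovK //.
Qed.

Definition UU := vsub (q 1) (q 3).
Definition WW := vsub (q 1) (q 0).
Definition good v := q v = affv (q 1) UU WW (rdiff (labi v) CC) (rdiff (labj bA bB v) 2).

Lemma step a b c d : a < n -> b < n -> c < n -> d < n -> good a -> good b -> good c ->
  EE bA bB c a -> EE bA bB c b -> EE bA bB d a -> EE bA bB d b -> a <> b -> c <> d ->
  labi d + labi c = labi a + labi b -> labj bA bB d + labj bA bB c = labj bA bB a + labj bA bB b ->
  good d.
Proof.
move=> ha hb hc hd ga gb gc eca ecb eda edb hab hcd hli hlj.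
have R := rhombus (qedge hc ha eca) (qedge hc hb ecb) (qedge hd ha eda) (qedge hd hb edb)
  (qinj ha hb hab) (qinj hc hd hcd).
rewrite /good; apply: (aff_step ga gb gc R); exact: rdiff_add.
Qed.

Definition step_ok c a b d :=
  EE bA bB c a /\ EE bA bB c b /\ EE bA bB d a /\ EE bA bB d b /\ a <> b /\ c <> d /\
  labi d + labi c = labi a + labi b /\ labj bA bB d + labj bA bB c = labj bA bB a + labj bA bB b.

Lemma strip (t : nat -> nat) len : (forall j, j < len -> t j < n) ->
  good (t 0) -> good (t 1) -> good (t 2) ->
  (forall j, j + 3 < len -> step_ok (t j) (t j.+1) (t j.+2) (t j.+3)) ->
  forall j, j < len -> good (t j).
Proof.
move=> ht g0 g1 g2 hs j; elim/ltn_ind: j => -[|[|[|k]]] IH hk //.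
have [e1 [e2 [e3 [e4 [e5 [e6 [e7 e8]]]]]]] := hs k (ltac:(lia)).
apply: (step (ht _ _) (ht _ _) (ht _ _) (ht _ _) (IH _ _ _) (IH _ _ _) (IH _ _ _) e1 e2 e3 e4 e5 e6 e7 e8);
  lia.
Qed.


Definition tb j := j + 1 - 2 * (j %% 2).

Lemma rdiff0 a : rdiff a a = IZR 0.
Proof. by rewrite /rdiff Rminus_diag. Qed.

Lemma good1 : good 1.
Proof.
rewrite /good (@labi_R1 bA bB 1) ?(@labj_R1 bA bB 1); try crunch.
have -> : CC - 1 %/ 2 = CC by crunch.
have -> : 1 + 1 %% 2 = 2 by [].
rewrite !rdiff0; exact: aff_base0.
Qed.

Lemma good0 : good 0.
Proof.
rewrite /good (@labi_R1 bA bB 0) ?(@labj_R1 bA bB 0); try crunch.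
have -> : CC - 0 %/ 2 = CC by crunch.
have -> : rdiff (1 + 0 %% 2) 2 = IZR (-1) by rewrite /rdiff /=; lra.
rewrite !rdiff0; exact: aff_baseW.
Qed.

Lemma good3 : good 3.
Proof.
rewrite /good (@labi_R1 bA bB 3) ?(@labj_R1 bA bB 3); try crunch.
have -> : rdiff (CC - 3 %/ 2) CC = IZR (-1).
  rewrite /rdiff minus_INR; last by crunch.
  by rewrite /=; lra.
have -> : 1 + 3 %% 2 = 2 by [].
rewrite !rdiff0; exact: aff_baseU.
Qed.

Ltac step_tac := rewrite /step_ok; (split; [edge_tac|]); (split; [edge_tac|]);
  (split; [edge_tac|]); (split; [edge_tac|]); (split; [crunch|]); (split; [crunch|]);
  split; simp_lab; crunch.

Lemma tbE0 k : tb (2 * k) = 2 * k + 1.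
Proof. rewrite /tb; crunch. Qed.
Lemma tbE1 k : tb (2 * k).+1 = 2 * k.
Proof. rewrite /tb; crunch. Qed.
Lemma tbE2 k : tb (2 * k).+2 = 2 * k.+1 + 1.
Proof. rewrite /tb; crunch. Qed.
Lemma tbE3 k : tb (2 * k).+3 = 2 * k.+1.
Proof. rewrite /tb; crunch. Qed.
Lemma tbO0 k : tb (2 * k + 1) = 2 * k.
Proof. rewrite /tb; crunch. Qed.
Lemma tbO1 k : tb (2 * k + 1).+1 = 2 * k.+1 + 1.
Proof. rewrite /tb; crunch. Qed.
Lemma tbO2 k : tb (2 * k + 1).+2 = 2 * k.+1.
Proof. rewrite /tb; crunch. Qed.
Lemma tbO3 k : tb (2 * k + 1).+3 = 2 * k.+2 + 1.
Proof. rewrite /tb; crunch. Qed.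

Lemma bottom_good j : j < SS -> good (tb j).
Proof.
apply: strip.
- move=> k hk; rewrite /tb; crunch.
- exact: good1.
- exact: good0.
- exact: good3.
move=> k hk.
have [k' [hk'|hk']] : exists k', k = 2 * k' \/ k = 2 * k' + 1 by exists (k %/ 2); crunch.
- rewrite hk' tbE0 tbE1 tbE2 tbE3; step_tac.
- rewrite hk' tbO0 tbO1 tbO2 tbO3; step_tac.
Qed.

Lemma tbK v : tb (tb v) = v.
Proof. rewrite /tb; crunch. Qed.

Lemma bottom_all v : v < SS -> good v.
Proof. move=> hv; rewrite -(tbK v); apply: bottom_good; rewrite /tb; crunch. Qed.

Definition tband j := nth 0 [:: 2; 0; 3; 1; SS; SS + 1; SS + 2; SS + 3; SS + 6; SS + 4; SS + 7; SS + 5] j.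

Lemma band_good j : j < 12 -> good (tband j).
Proof.
apply: strip.
- move=> k hk; case: k hk => [|[|[|[|[|[|[|[|[|[|[|[|k]]]]]]]]]]]] hk; rewrite /tband /=; crunch.
- by rewrite /tband /=; apply: bottom_all; crunch.
- by rewrite /tband /=; apply: bottom_all; crunch.
- by rewrite /tband /=; apply: bottom_all; crunch.
move=> k hk; case: k hk => [|[|[|[|[|[|[|[|[|k]]]]]]]]] hk; try (exfalso; lia);
  rewrite /tband /=; step_tac.
Qed.

Definition ttop j := SS + 4 + tb j.

Lemma top_good j : j < SS -> good (ttop j).
Proof.
apply: strip.
- move=> k hk; rewrite /ttop /tb; crunch.
- have -> : ttop 0 = tband 11 by rewrite /ttop /tband /tb /=; crunch.
  exact: band_good.
- have -> : ttop 1 = tband 9 by rewrite /ttop /tband /tb /=; crunch.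
  exact: band_good.
- have -> : ttop 2 = tband 10 by rewrite /ttop /tband /tb /=; crunch.
  exact: band_good.
move=> k hk.
have [k' [hk'|hk']] : exists k', k = 2 * k' \/ k = 2 * k' + 1 by exists (k %/ 2); crunch.
- rewrite /ttop hk' tbE0 tbE1 tbE2 tbE3; step_tac.
- rewrite /ttop hk' tbO0 tbO1 tbO2 tbO3; step_tac.
Qed.

Lemma top_all v : SS + 4 <= v < T1 -> good v.
Proof.
move=> hv; have := top_good (j := tb (v - SS - 4)) _; rewrite /ttop tbK.
have -> : SS + 4 + (v - SS - 4) = v by crunch.
by apply; rewrite /tb; crunch.
Qed.

Lemma labj_u : labj bA bB (T1 + i) = 3.
Proof. rewrite (@labj_R4 bA bB (T1 + i)); last by crunch. by rewrite addKn hbA. Qed.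

Lemma labj_w : labj bA bB (T1 + m + i) = 4.
Proof.
rewrite (@labj_R5 bA bB (T1 + m + i)); last by crunch.
have -> : T1 + m + i - T1 - m = i by crunch.
by rewrite hbB.
Qed.

Ltac edge_tacR := rewrite /EE; apply/andP; split;
  [ rewrite /AB /inA /inB; crunch | rewrite /lab ?labj_u ?labj_w; simp_lab; ladj_tac ].

Lemma good_u : good (T1 + i).
Proof.
have ha := bottom_all (v := 2 * (MM + 1 - (2 + 3 * i)) + 1) ltac:(crunch).
have hb := bottom_all (v := 2 * (MM - (2 + 3 * i)) + 1) ltac:(crunch).
have hc := bottom_all (v := 2 * (MM - (2 + 3 * i))) ltac:(crunch).
apply: (step _ _ _ _ ha hb hc); try crunch; try edge_tacR.
all: rewrite ?labj_u; try (rewrite (@labi_R4 bA bB (T1 + i)); [|crunch]); simp_lab; crunch.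
Qed.

Lemma good_w : good (T1 + m + i).
Proof.
have ha := top_all (v := SS + 4 + 2 * (MM + 1 - (2 + 3 * i))) ltac:(crunch).
have hb := top_all (v := SS + 4 + 2 * (MM + 2 - (2 + 3 * i))) ltac:(crunch).
have hc := top_all (v := SS + 4 + 2 * (MM + 2 - (2 + 3 * i)) + 1) ltac:(crunch).
apply: (step _ _ _ _ ha hb hc); try crunch; try edge_tacR.
all: rewrite ?labj_w; try (rewrite (@labi_R5 bA bB (T1 + m + i)); [|crunch]); simp_lab; crunch.
Qed.

Lemma H_contra : False.
Proof.
have e10 : EE bA bB 1 0 by edge_tac.
have d10 : sqdist (q 1) (q 0) = R1 by apply: qedge e10; crunch.
have dwu : sqdist (q (T1 + m + i)) (q (T1 + i)) = R1.
  rewrite good_w good_u -d10.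
  have -> : labi (T1 + m + i) = labi (T1 + i).
    rewrite (@labi_R5 bA bB (T1 + m + i)); last by crunch.
    rewrite (@labi_R4 bA bB (T1 + i)); last by crunch.
    crunch.
  apply: aff_dist; last by [].
  rewrite labj_u labj_w /rdiff /=; lra.
have := proj2 (piff (ov (T1 + m + i)) (ov (T1 + i))) dwu.
rewrite /eg !ovK; try crunch.
rewrite /EE /AB /inA /inB.
have -> : (SS + 2 <= T1 + m + i < T1) || (T1 + m <= T1 + m + i < T1 + 2 * m) by crunch.
have -> : (T1 + i < SS) || (T1 <= T1 + i < T1 + m) || (T1 + 2 * m <= T1 + i) by crunch.
by rewrite orbT.
Qed.

End NotUD.

End Construction.

Lemma nbr_view_ext n (e e' : rel 'I_n) (id : 'I_n -> nat) (c c' : 'I_n -> cert) v :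
  (forall u, e v u = e' v u) -> (forall u, e v u -> c u = c' u) ->
  nbr_view e id c v = nbr_view e' id c' v.
Proof.
move=> he hc; apply: functional_extensionality => i; rewrite /nbr_view.
rewrite (@eq_pick _ (fun u => e v u && (id u == i)) (fun u => e' v u && (id u == i))); last first.
  by move=> u; rewrite he.
case: pickP => [u /andP [hu _]|_] //.
by rewrite hc // he.
Qed.

Section Final.
Variables (n m : nat) (hn : 14 * m + 20 <= n) (k : nat) (hk : 0 < k).

Definition idv : 'I_n -> nat := fun v => val v + 1.

Lemma conn0 bA bB v : v < n -> connect (@eg n m bA bB) (ov hn 0) (ov hn v).
Proof.
elim/ltn_ind: v => v IH hv.
case: v IH hv => [|v] IH hv; first exact: connect0.
have [h1 h2] := @par_ok n m hn bA bB v.+1 (ltac:(apply/andP; split; lia)).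
apply: connect_trans (IH _ h1 (ltn_trans h1 hv)) _.
apply: connect1; rewrite /eg !ovK //; lia.
Qed.

Lemma ov_val (x : 'I_n) : ov hn (val x) = x.
Proof. apply: ord_inj; rewrite ovK //; exact: ltn_ord. Qed.

Lemma inst bA bB : instance k (eg m bA bB) idv.
Proof.
have sym : symmetric (@eg n m bA bB).
  move=> u v; exact: (EE_sym hn bA bB (val u) (val v)).
split; [split|split].
- exact: sym.
- by move=> u; rewrite /eg EE_irr.
- move=> x y; rewrite -(ov_val x) -(ov_val y).
  have h1 := conn0 bA bB (ltn_ord x); have h2 := conn0 bA bB (ltn_ord y).
  rewrite (sym_connect_sym sym) in h1; exact: connect_trans h1 h2.
- split.
  + by move=> u v; rewrite /idv => h; apply: val_inj; lia.
  + move=> v; rewrite /idv; apply/andP; split; first lia.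
    have hv := ltn_ord v.
    have : n <= n ^ k.
      have -> : n ^ k = n * n ^ k.-1 by rewrite -expnS prednK.
      by rewrite leq_pmulr // expn_gt0; apply/orP; left; lia.
    by rewrite addn1; apply: leq_trans.
Qed.


Ltac crunch2 := unfold T1, CC in *; unfold SS in *; unfold MM in *; lia.

Lemma agreeK (cA cB : 'I_n -> cert) :
  (forall j, j < 4 -> cA (ov hn (SS m + j)) = cB (ov hn (SS m + j))) ->
  forall u : 'I_n, SS m <= u < SS m + 4 -> cA u = cB u.
Proof.
move=> ag u hu.
have := ag (nat_of_ord u - SS m) ltac:(lia).
have -> : SS m + (nat_of_ord u - SS m) = nat_of_ord u by crunch2.
by rewrite ov_val.
Qed.

Lemma cross_contra (V : verifier) bA bB i (cA cB : 'I_n -> cert) :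
  bA i = true -> bB i = false ->
  all_accept V (@eg n m bA bA) idv cA -> all_accept V (@eg n m bB bB) idv cB ->
  (forall j, j < 4 -> cA (ov hn (SS m + j)) = cB (ov hn (SS m + j))) ->
  all_accept V (@eg n m bA bB) idv (fun u => if inB m u then cB u else cA u).
Proof.
move=> hA hB accA accB ag.
have agK := agreeK ag.
move=> v /=.
case hAv: (inA m v).
  have nB : inB m v = false.
    by move: hAv; rewrite /inA /inB => ?; apply/negbTE; crunch2.
  rewrite /= nB (@nbr_view_ext _ _ (@eg n m bA bA) _ _ cA); first exact: accA.
  - by move=> u; exact: (viewA hn bA bB u hAv).
  - move=> u he /=; case hBu: (inB m u) => //; exfalso; move: he.
    by rewrite /eg /EE /AB hAv hBu.
case hBv: (inB m v).
  rewrite /= (@nbr_view_ext _ _ (@eg n m bB bB) _ _ cB); first exact: accB.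
  - by move=> u; exact: (viewB hn bA bB u hBv).
  - move=> u he /=; case hBu: (inB m u) => //.
    have hAu : inA m u = false.
      apply/negP => hAu; move: he.
      by rewrite /eg /EE /AB hAu hBv orbT.
    apply: agK; move: hAu hBu (ltn_ord u); rewrite /inA /inB => /negbT ? /negbT ? ?; crunch2.
have hv : SS m <= v < SS m + 2.
  by move: hAv hBv (ltn_ord v); rewrite /inA /inB => /negbT ? /negbT ? ?; crunch2.
rewrite /= (@nbr_view_ext _ _ (@eg n m bA bA) _ _ cA); first exact: accA.
- by move=> u; exact: (viewF hn bA bB hv (ltn_ord u)).
- move=> u he /=; case hBu: (inB m u) => //.
  have hl : ladj (lab n m bA bB v) (lab n m bA bB u).
    by move: he; rewrite /eg /EE => /andP [].
  have [e|e] := F_Bnbr hn hv (ltn_ord u) hBu hl; symmetry; apply: agK; crunch2.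

Qed.
End Final.

Fixpoint code (s : seq bool) : nat := if s is b :: s' then 1 + b + 2 * code s' else 0.

Lemma code_le s : code s + 2 <= 2 ^ (size s).+1.
Proof. elim: s => [|b s IH] //=; rewrite expnS; move: (2 ^ (size s).+1) IH => X IH; case: b => /=; lia. Qed.

Lemma code_lt s : code s < 2 ^ (size s).+1.
Proof. have := code_le s; move: (2 ^ (size s).+1) => X; lia. Qed.

Lemma code_inj : injective code.
Proof.
elim=> [|b s IH] [|b' s'] //=; try lia.
move=> h; have hb : b = b' by case: b b' h => [] [] /=; lia.
subst b'; congr cons; apply: IH; lia.
Qed.

Lemma pigeon_arith m L : 4 * L + 9 <= m -> (2 ^ L.+1).+1 ^ 4 < 2 ^ m.
Proof.
move=> h.
have h1 : (2 ^ L.+1).+1 <= 2 ^ L.+2.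
  rewrite (expnS 2 L.+1); have : 0 < 2 ^ L.+1 by rewrite expn_gt0.
  move: (2 ^ L.+1) => X; lia.
apply: (@leq_ltn_trans ((2 ^ L.+2) ^ 4)); first by rewrite leq_exp2r.
rewrite -expnM ltn_exp2l //; lia.
Qed.

Definition bits m (t : m.-tuple bool) : nat -> bool := fun i => nth false t i.

Lemma main_claim k (hk : 0 < k) n m (hnm : 14 * m + 20 <= n) L (hL : 4 * L + 9 <= m)
  (P : prover) (V : verifier) : is_PLS_unit_distance k P V ->
  exists (t : m.-tuple bool) (j : 'I_4),
    L < size (P n (@eg n m (bits t) (bits t)) (@idv n) (ov hnm (SS m + j))).
Proof.
move=> [comp snd].
set G := fun t : m.-tuple bool => @eg n m (bits t) (bits t).
set cert_of := fun (t : m.-tuple bool) (j : 'I_4) => P n (G t) (@idv n) (ov hnm (SS m + j)).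
case: (boolP [exists t, exists j, L < size (cert_of t j)]).
  by move=> /existsP [t /existsP [j hj]]; exists t, j.
move=> hno.
have small : forall t j, size (cert_of t j) <= L.
  move=> t j; rewrite leqNgt; apply/negP => hlt; move/negP: hno; apply.
  by apply/existsP; exists t; apply/existsP; exists j.
pose B := 2 ^ L.+1.
pose f := fun t : m.-tuple bool => [ffun j : 'I_4 => (inord (code (cert_of t j)) : 'I_B.+1)].
have ninj : ~~ injectiveb f.
  apply/negP => /injectiveP inj.
  have := leq_card f inj.
  rewrite card_ffun !card_ord card_tuple card_bool.
  have := pigeon_arith hL; rewrite /B; lia.
case/injectivePn: ninj => t1 [t2 hne hf].
have agree : forall j, j < 4 -> cert_of t1 (inord j) = cert_of t2 (inord j).
  move=> j hj; have := congr1 (fun g : {ffun 'I_4 -> 'I_B.+1} => val (g (inord j))) hf; rewrite /= !ffunE.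
  have hc : forall t, code (cert_of t (inord j)) < B.+1.
    move=> t; apply: (leq_trans (code_lt _)); apply: leqW.
    by rewrite /B leq_exp2l // ltnS; exact: small.
  by rewrite !inordK ?hc // => /code_inj.

have [i hi hneq] : exists2 i, i < m & bits t1 i != bits t2 i.
  case: (boolP [exists i : 'I_m, bits t1 i != bits t2 i]).
    by move/existsP => [i hi]; exists i.
  move=> /existsPn hall; exfalso; move/eqP: hne; apply; apply: val_inj.
  apply: (@eq_from_nth _ false); first by rewrite !size_tuple.
  move=> j; rewrite size_tuple => hj; have := hall (Ordinal hj); rewrite negbK => /eqP.
  by rewrite /bits.
have agree' : forall (ta tb : m.-tuple bool), (forall j, j < 4 -> cert_of ta (inord j) = cert_of tb (inord j)) ->
    forall j, j < 4 -> P n (G ta) (@idv n) (ov hnm (SS m + j)) = P n (G tb) (@idv n) (ov hnm (SS m + j)).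
  move=> ta tb ag j hj; have := ag j hj; rewrite /cert_of inordK //.
have key : forall (ta tb : m.-tuple bool), bits ta i = true -> bits tb i = false ->
    (forall j, j < 4 -> cert_of ta (inord j) = cert_of tb (inord j)) -> False.
  move=> ta tb hA hB ag.
  have accA := comp n (G ta) (@idv n) (inst hnm hk _ _) (Gx_ud hnm _).
  have accB := comp n (G tb) (@idv n) (inst hnm hk _ _) (Gx_ud hnm _).
  have acc := cross_contra hk hA hB accA accB (agree' ta tb ag).
  apply: (snd n _ (@idv n) (inst hnm hk _ _) _ _ acc).
  by move=> [p [pinj piff]]; exact: (H_contra hnm pinj piff hi hA hB).
exfalso; case h1: (bits t1 i).
- apply: (key t1 t2 h1) => //; by move: hneq; rewrite h1; case: (bits t2 i).
- apply: (key t2 t1) => //; first by move: hneq; rewrite h1; case: (bits t2 i).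
  by move=> j hj; rewrite agree.
Qed.

Theorem theorem5p4 :
  forall k : nat, (1 <= k)%N ->
  exists c : R, Rlt R0 c /\
  exists N : nat, forall n : nat, (N <= n)%N ->
  forall (P : prover) (V : verifier), is_PLS_unit_distance k P V ->
  exists (e : rel 'I_n) (id : 'I_n -> nat) (v : 'I_n),
    instance k e id /\ unit_distance_graph e /\
    Rle (Rmult c (INR n)) (INR (size (P n e id v))).
Proof.
move=> k hk; exists (Rinv (IZR 112)); split.
  by apply: Rinv_0_lt_compat; apply: IZR_lt; lia.
exists 300 => n hn P V hpls.
have hnm : 14 * ((n - 20) %/ 14) + 20 <= n by lia.
have hL : 4 * (((n - 20) %/ 14 - 9) %/ 4) + 9 <= (n - 20) %/ 14 by lia.
have [t [j hj]] := main_claim hk hnm hL hpls.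
exists (@eg n ((n - 20) %/ 14) (bits t) (bits t)), (@idv n), (ov hnm (SS ((n - 20) %/ 14) + j)).
split; first by have := inst hnm hk (bits t) (bits t).
split; first by have := Gx_ud hnm (bits t).
move: hj; set s := size _ => hj.
have hns : n <= 112 * s by lia.
have h112 : INR 112 = IZR 112 by rewrite INR_IZR_INZ.
have := le_INR _ _ (elimT leP hns); rewrite mult_INR h112 => h.
lra.
Qed.
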